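(* Let $G$ be a finite group. Then the commuting graph $\Gamma_C(G)$ is minimally edge connected if and only if $G$ is abelian.
   Context: The commuting graph $\Gamma_C(G)$ of a group $G$ is the simple undirected graph with vertex set $G$ in which two distinct elements $x,y$ are adjacent if and only if $xy=yx$. For a connected graph $\Gamma$, an edge cut-set is a set $S$ of edges such that $\Gamma-S$ is disconnected or has just one vertex, and the edge connectivity $\kappa'(\Gamma)$ is the smallest size of an edge cut-set. $\Gamma$ is minimally edge connected if $\kappa'(\Gamma-\epsilon)=\kappa'(\Gamma)-1$ for every edge $\epsilon$ of $\Gamma$. *)

(* Defs.v *)
From mathcomp Require Import all_boot all_fingroup.
Set Implicit Arguments. Unset Strict Implicit. Unset Printing Implicit Defensive.

Section Graphs.
Variable T : finType.

(* A simple graph on vertex set T is given by its edge set E, a set of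
   2-element subsets {x, y} of T. *)
Definition adjE (E : {set {set T}}) : rel T :=
  fun x y => (x != y) && ([set x; y] \in E).

Definition connectedE (E : {set {set T}}) : bool :=
  [forall x, forall y, connect (adjE E) x y].

Definition edge_cutset (E S : {set {set T}}) : bool :=
  (S \subset E) && (~~ connectedE (E :\: S) || (#|T| == 1)).

(* Edge connectivity: the smallest size of an edge cut-set (E itself is
   always an edge cut-set, so #|E| is a correct default). *)
Definition edge_conn (E : {set {set T}}) : nat :=
  \big[minn/#|E|]_(S : {set {set T}} | edge_cutset E S) #|S|.

Definition min_edge_connected (E : {set {set T}}) : Prop :=
  connectedE E /\
  forall e, e \in E -> edge_conn (E :\ e) = (edge_conn E).-1.

End Graphs.

Definition commuting_edges (gT : finGroupType) : {set {set gT}} :=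
  [set [set p.1; p.2] | p in
     [set p : gT * gT | (p.1 != p.2) && (p.1 * p.2 == p.2 * p.1)%g]].

(* Main.v *)
Require Import Defs.
From mathcomp Require Import all_boot all_fingroup zify.
Set Implicit Arguments. Unset Strict Implicit. Unset Printing Implicit Defensive.

Section Gen.
Variable T : finType.
Implicit Types (E F S X : {set {set T}}) (x y u v z : T).

Lemma adjE_sym F : symmetric (adjE F).
Proof. by move=> x y; rewrite /adjE eq_sym setUC. Qed.

Lemma connect_isolated (e : rel T) x y :
  (forall z, ~~ e x z) -> connect e x y -> y = x.
Proof.
move=> H /connectP [[|z p] /= Hp ->] //.
by move: Hp; rewrite (negbTE (H z)).
Qed.

Lemma not_conn_set0 : 1 < #|T| -> ~~ connectedE (set0 : {set {set T}}).
Proof.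
move=> /card_gt1P [x [y [_ _ xy]]].
apply/negP => /forallP /(_ x) /forallP /(_ y) H.
move: (connect_isolated (e := adjE set0) (x := x) (y := y)) => H2.
have : y = x by apply: H2 => // z; rewrite /adjE in_set0 andbF.
by move=> yx; move: xy; rewrite yx eqxx.
Qed.

Lemma bigmin_le (I : eqType) (r : seq I) (P : pred I) (G : I -> nat) c i :
  i \in r -> P i -> \big[minn/c]_(j <- r | P j) G j <= G i.
Proof.
elim: r => [|a r IH] //= ; rewrite inE big_cons => /orP [/eqP <-|ir] Pi.
- by rewrite Pi geq_minl.
- case: ifP => _; last exact: IH.
  by rewrite geq_min IH ?orbT.
Qed.

Lemma edge_conn_le E S : S \subset E -> ~~ connectedE (E :\: S) ->
  edge_conn E <= #|S|.
Proof.
move=> sSE nc.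
have cS : edge_cutset E S by rewrite /edge_cutset sSE nc.
by rewrite /edge_conn; apply: bigmin_le => //; rewrite mem_index_enum.
Qed.

Lemma edge_conn_ge E k : 1 < #|T| ->
  (forall S, S \subset E -> ~~ connectedE (E :\: S) -> k <= #|S|) ->
  k <= edge_conn E.
Proof.
move=> n2 H.
rewrite /edge_conn; apply: (big_ind (fun a => k <= a)).
- apply: H; first exact: subxx.
  by rewrite setDv; apply: not_conn_set0.
- by move=> a b ha hb; rewrite leq_min ha hb.
move=> S /andP [sSE /orP [nc | /eqP n1]]; first exact: H.
by move: n2; rewrite n1.
Qed.

Lemma isolate E x : 1 < #|T| ->
  ~~ connectedE (E :\: [set A in E | x \in A]).
Proof.
move=> /card_gt1P [a [b [_ _ ab]]].
have [y xy] : exists y, y != x.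
  case: (eqVneq a x) => [ax|ax]; last by exists a.
  by exists b; rewrite -ax eq_sym.
apply/negP => /forallP /(_ x) /forallP /(_ y) H.
have : y = x.
  apply: (connect_isolated _ H) => z; rewrite /adjE.
  apply/negP => /andP [_]; rewrite !inE => /andP [/negP nA AE]; apply: nA.
  by rewrite AE eqxx.
by move/eqP; rewrite (negbTE xy).
Qed.

Lemma set2_inj x y y' : [set x; y] = [set x; y'] -> y = y'.
Proof.
move=> H.
have : y \in [set x; y'] by rewrite -H set22.
case/set2P => [yx|] //.
have : y' \in [set x; y] by rewrite H set22.
by case/set2P => ->.
Qed.

Section Count.
Variables (E' S X : {set {set T}}) (u v : T).
Let F := E' :\: S.
Hypothesis nc : ~~ connect (adjE F) u v.
Definition fcut z := if connect (adjE F) u z then [set z; v] else [set u; z].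

Lemma fcut_notin z : z != u -> fcut z \notin F.
Proof.
move=> zu; rewrite /fcut; case: ifP => cz; apply/negP => Hin.
- have zv : z != v by apply/negP => /eqP zv; move: nc; rewrite -zv cz.
  move/negP: nc; apply; apply: (connect_trans cz); apply: connect1.
  by rewrite /adjE zv Hin.
- move/negP: cz; apply; apply: connect1; by rewrite /adjE eq_sym zu Hin.
Qed.

Lemma fcut_inj (A : {set T}) : (forall z, z \in A -> z != u) ->
  {in A &, injective fcut}.
Proof.
have uv : u != v by apply/negP => /eqP uv; move: nc; rewrite -uv connect0.
move=> Au z z' zA z'A; rewrite /fcut.
case: ifP => cz; case: ifP => cz'.
- move=> H; have : z \in [set z'; v] by rewrite -H set21.
  case/set2P => // zv; by move: nc; rewrite -zv cz.
- move=> H; have : v \in [set u; z'] by rewrite -H set22.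
  case/set2P => [vu|vz']; first by move: uv; rewrite vu eqxx.
  have : z \in [set u; z'] by rewrite -H set21.
  case/set2P => [zu|zz']; first by move: (Au z zA); rewrite zu eqxx.
  by move: nc; rewrite vz' -zz' cz.
- move=> H; have : v \in [set u; z] by rewrite H set22.
  case/set2P => [vu|vz]; first by move: uv; rewrite vu eqxx.
  have : z' \in [set u; z] by rewrite H set21.
  case/set2P => [zu|zz']; first by move: (Au z' z'A); rewrite zu eqxx.
  by move: nc; rewrite vz -zz' cz'.
- exact: set2_inj.
Qed.

Lemma cut_count (A : {set T}) : (forall z, z \in A -> z != u) ->
  (forall z, z \in A -> fcut z \in E' :|: X) -> #|A| <= #|S| + #|X|.
Proof.
move=> Au AE.
rewrite -(card_in_imset (fcut_inj Au)).
apply: (leq_trans _ (leq_trans (subset_leq_card (_ : _ \subset S :|: X)) _)).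
- exact: leqnn.
- apply/subsetP => _ /imsetP [z zA ->].
  move: (AE z zA) (fcut_notin (Au z zA)); rewrite /F !inE.
  by case: (fcut z \in E'); case: (fcut z \in S); case: (fcut z \in X).
by rewrite cardsU leq_subr.
Qed.
End Count.

End Gen.

Section Grp.
Variable gT : finGroupType.
Local Notation CE := (commuting_edges gT).
Implicit Types x y : gT.

Lemma inCE x y : ([set x; y] \in CE) = (x != y) && (x * y == y * x)%g.
Proof.
apply/idP/idP.
- case/imsetP => [[a b]]; rewrite inE /= => /andP [ab cab] H.
  have xy : x != y.
    have := cards2 x y; rewrite H cards2 ab.
    by case: (x != y).
  rewrite xy /=.
  have : x \in [set a; b] by rewrite -H set21.
  have : y \in [set a; b] by rewrite -H set22.
  case/set2P => ->; case/set2P => -> //; rewrite ?eqxx // in xy.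
  by rewrite eq_sym.
- move=> H; apply/imsetP; exists (x, y) => //; by rewrite inE.
Qed.

Lemma CE_form A : A \in CE -> exists x y, A = [set x; y].
Proof. by case/imsetP => [[a b]] _ ->; exists a, b. Qed.

Lemma star_eq x :
  [set A in CE | x \in A] = [set [set x; y] | y in 'C[x]%g :\ x].
Proof.
apply/setP => A; rewrite inE; apply/idP/idP.
- case/andP => AE; case: (CE_form AE) => [a [b AE']].
  rewrite AE' in AE *; case/set2P => ->.
  + apply/imsetP; exists b => //; move: AE; rewrite inCE.
    rewrite in_setD1 cent1E => /andP [ab /eqP ->].
    by rewrite eq_sym ab eqxx.
  + apply/imsetP; exists a; last by rewrite setUC.
    move: AE; rewrite inCE in_setD1 cent1E => /andP [ab /eqP ->].
    by rewrite ab eqxx.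
- case/imsetP => y; rewrite in_setD1 cent1E => /andP [yx cyx] ->.
  by rewrite inCE eq_sym yx set21 (eqP cyx) eqxx.
Qed.

Lemma card_star x : #|[set A in CE | x \in A]| = (#|'C[x]%g| - 1)%N.
Proof.
rewrite star_eq card_in_imset; last by move=> y y' _ _; apply: set2_inj.
rewrite [#|'C[x]%g|](cardsD1 x).
have -> : (x \in 'C[x]%g) by rewrite cent1E.
by rewrite add1n subn1.
Qed.

End Grp.

Lemma not_conn_ex (T : finType) (F : {set {set T}}) :
  ~~ connectedE F -> exists u v, ~~ connect (adjE F) u v.
Proof.
case/forallPn => u /forallPn [v H]; by exists u, v.
Qed.

Section Main.
Variable gT : finGroupType.
Local Notation CE := (commuting_edges gT).
Implicit Types x y : gT.

Lemma fcut_CE E' S u v z : ~~ connect (adjE (E' :\: S)) u v -> z != u ->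
  (z * v == v * z)%g -> (u * z == z * u)%g -> fcut E' S u v z \in CE.
Proof.
move=> nc zu czv cuz; rewrite /fcut; case: ifP => cz; rewrite inCE.
- have -> : z != v by apply/negP => /eqP zv; move: nc; rewrite -zv cz.
  by [].
- by rewrite eq_sym zu.
Qed.

Lemma star_sub x (E : {set {set gT}}) : [set A in E | x \in A] \subset E.
Proof. by apply/subsetP => A; rewrite inE => /andP []. Qed.

Lemma classes_lemma (x0 : gT) :
  (forall z : gT, #|'C[x0]%g| <= #|'C[z]%g|) -> #|'C[x0]%g| < #|gT| ->
  exists b : gT, (b != 1%g) && (#|'C[x0]%g| < #|'C[b]%g|).
Proof.
move=> Hmin lt.
apply/existsP; apply/negP => /existsP Hn.
have Heq : forall b : gT, b != 1%g -> #|'C[b]%g| = #|'C[x0]%g|.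
  move=> b b1; apply/eqP; rewrite eqn_leq Hmin andbT leqNgt.
  apply/negP => H; apply: Hn; exists b; by rewrite b1 H.
set G := [set: gT]%G.
have Hcl : forall b : gT, #|'C[b]%g| * #|(b ^: G)%g| = #|gT|.
  move=> b; rewrite -index_cent1 -cardsT.
  have := Lagrange (subsetIl G 'C[b]%g).
  by rewrite /= setTI.
set m := #|'C[x0]%g|.
have m0 : 0 < m by apply/card_gt0P; exists 1%g; apply: group1.
set d := #|(x0 ^: G)%g|.
have Hd : forall b : gT, b != 1%g -> #|(b ^: G)%g| = d.
  move=> b b1; apply/eqP; rewrite -(eqn_pmul2l m0).
  by rewrite {1}/m -(Heq b b1) Hcl Hcl.
have Hsum := sum_card_class G.
rewrite (bigD1 (1 ^: G)%g) /= in Hsum; last by apply: mem_classes; apply: group1.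
rewrite class1G cards1 in Hsum.
have dv : d %| \sum_(C in classes G | C != 1%g) #|C|.
  apply: dvdn_sum => C /andP [/imsetP [b _ ->] Cb].
  rewrite Hd //; apply/negP => /eqP b1; move: Cb; by rewrite b1 class1G eqxx.
have dn : d %| #|G| by rewrite cardsT -(Hcl x0) dvdn_mull.
have dv' : d %| \sum_(i in classes [set: gT] | i != 1%g) #|i| := dv.
move: dn; rewrite /G /= -Hsum (dvdn_addl _ dv') dvdn1 => dn.
have := Hcl x0; rewrite -/m -/d (eqP dn) muln1 => mn.
by move: lt; rewrite -/m mn ltnn.
Qed.

Lemma abelian_dir : abelian [set: gT] -> min_edge_connected CE.
Proof.
move=> Hab.
have comm : forall x y, (x * y == y * x)%g.
  move=> x y; apply/eqP; exact: (centsP Hab) x (in_setT x) y (in_setT y).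
have CT : forall x, 'C[x]%g = [set: gT].
  by move=> x; apply/setP => y; rewrite cent1E in_setT comm.
have cstar : forall x, #|[set A in CE | x \in A]| = (#|gT| - 1)%N.
  by move=> x; rewrite card_star CT cardsT.
have lower : forall (X E' S : {set {set gT}}), CE \subset E' :|: X ->
    ~~ connectedE (E' :\: S) -> (#|gT| - 1 <= #|S| + #|X|)%N.
  move=> X E' S sub /not_conn_ex [u [v nc]].
  have := cut_count (X := X) nc (A := [set~ u]).
  rewrite cardsC1 subn1; apply.
  - by move=> z; rewrite in_setC1.
  - move=> z; rewrite in_setC1 => zu; apply: (subsetP sub).
    by apply: fcut_CE.
split.
- apply/forallP => x; apply/forallP => y.
  case: (eqVneq x y) => [->|xy]; first exact: connect0.
  by apply: connect1; rewrite /adjE xy inCE xy comm.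
move=> e eE.
case: (CE_form eE) => a [b ed].
have ab : a != b by move: eE; rewrite ed inCE => /andP [].
have n2 : 1 < #|gT| by apply/card_gt1P; exists a, b.
have c1 : edge_conn CE = (#|gT| - 1)%N.
  apply/eqP; rewrite eqn_leq; apply/andP; split.
  - rewrite -(cstar 1%g); apply: edge_conn_le; first exact: star_sub.
    exact: isolate.
  - apply: edge_conn_ge => // S _ nc.
    have := lower set0 CE S; rewrite setU0 cards0 addn0; apply => //.
have c2 : edge_conn (CE :\ e) = (#|gT| - 2)%N.
  apply/eqP; rewrite eqn_leq; apply/andP; split.
  - have -> : (#|gT| - 2 = #|[set A in CE :\ e | a \in A]|)%N.
      have -> : [set A in CE :\ e | a \in A] = [set A in CE | a \in A] :\ e.
        by apply/setP => A; rewrite !inE andbA.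
      have := cardsD1 e [set A in CE | a \in A].
      have -> : e \in [set A in CE | a \in A] by rewrite inE eE ed set21.
      rewrite cstar; lia.
    apply: edge_conn_le; first exact: star_sub.
    exact: isolate.
  - apply: edge_conn_ge => // S _ nc.
    have := lower [set e] (CE :\ e) S; rewrite cards1.
    have -> : CE \subset (CE :\ e) :|: [set e].
      apply/subsetP => A AE; rewrite !inE AE.
      by case: (A == e).
    move=> H; have := H isT nc; lia.
by rewrite c1 c2; lia.
Qed.

Lemma nonabelian_dir : min_edge_connected CE -> abelian [set: gT].
Proof.
case=> _ Hall; apply/idPn => Hna.
have [x [y nxy]] : exists x y : gT, (x * y != y * x)%g.
  case/subsetPn: Hna => x _ xC.
  have : ~~ [forall y, (x * y == y * x)%g].
    apply/negP => /forallP H; move/negP: xC; apply; apply/centP => z _.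
    exact/eqP/H.
  by case/forallPn => y Hy; exists x, y.
have ltx : #|'C[x]%g| < #|gT|.
  rewrite -cardsT; apply: proper_card; apply/properP; split; first exact: subsetT.
  by exists y => //; rewrite cent1E eq_sym.
case: (@arg_minnP gT x predT (fun z : gT => #|'C[z]%g|) isT) => x0 _ Hmin.
set m := #|'C[x0]%g|.
have Hmin' : forall z : gT, m <= #|'C[z]%g| by move=> z; apply: Hmin.
have lt : m < #|gT| by apply: leq_ltn_trans ltx; apply: Hmin.
have [b /andP [b1 mb]] := classes_lemma Hmin' lt.
have x01 : x0 != 1%g.
  apply/negP => /eqP x01; move: lt; rewrite /m x01.
  have -> : 'C[1%g]%g = [set: gT] :> {set gT}.
    by apply/setP => z; rewrite cent1E in_setT mulg1 mul1g eqxx.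
  by rewrite cardsT ltnn.
have m2 : 2 <= m.
  have := subset_leq_card (_ : [set 1%g; x0] \subset 'C[x0]%g).
  rewrite cards2 eq_sym x01; apply.
  apply/subsetP => z /set2P [->|->]; rewrite cent1E ?mulg1 ?mul1g //.
have n2 : 1 < #|gT| by lia.
set e := [set 1%g; b].
have eE : e \in CE by rewrite /e inCE mulg1 mul1g eqxx andbT eq_sym.
have up : edge_conn CE <= m - 1.
  rewrite /m -card_star; apply: edge_conn_le; first exact: star_sub.
  exact: isolate.
have low : m - 1 <= edge_conn (CE :\ e).
  apply: edge_conn_ge => // S _ /not_conn_ex [u0 [v0 nc]].
  have [w nw] : exists w, ~~ connect (adjE ((CE :\ e) :\: S)) 1%g w.
    case: (boolP (connect (adjE ((CE :\ e) :\: S)) 1%g u0)) => cu; last by exists u0.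
    case: (boolP (connect (adjE ((CE :\ e) :\: S)) 1%g v0)) => cv; last by exists v0.
    move: nc; rewrite (connect_trans _ cv) //.
    by rewrite (sym_connect_sym (@adjE_sym _ _)).
  have Au : forall (v z : gT), z \in 'C[v]%g :\ 1%g -> z != 1%g.
    by move=> v z; rewrite in_setD1 => /andP [].
  have cardA : forall v : gT, #|'C[v]%g| = (#|'C[v]%g :\ 1%g|).+1.
    by move=> v; rewrite (cardsD1 1%g) group1.
  have fin : forall v z, ~~ connect (adjE ((CE :\ e) :\: S)) 1%g v ->
      z \in 'C[v]%g :\ 1%g -> fcut (CE :\ e) S 1%g v z \in CE.
    move=> v z nv; rewrite in_setD1 cent1E => /andP [z1 czv].
    by apply: fcut_CE; rewrite ?mulg1 ?mul1g.
  case: (boolP (connect (adjE ((CE :\ e) :\: S)) 1%g b)) => cb.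
  - have := cut_count (X := set0) nw (A := 'C[w]%g :\ 1%g) (Au w).
    rewrite cards0 addn0; move=> H.
    have : #|'C[w]%g :\ 1%g| <= #|S|.
      apply: H => z zA; rewrite setU0 in_setD1 (fin w z nw zA) andbT.
      apply/negP => /eqP fe; move: fe; rewrite /fcut /e.
      case: ifP => cz fe.
      + have : w \in [set 1%g; b] by rewrite -fe set22.
        case/set2P => wb.
        * by move: nw; rewrite wb connect0.
        * by move: nw; rewrite wb cb.
      + have zb := set2_inj fe.
        by move: cz; rewrite zb cb.
    have := Hmin' w; rewrite cardA => h1 h2.
    rewrite leq_subLR add1n; apply: (leq_trans h1); by rewrite ltnS.
  - have := cut_count (X := [set e]) cb (A := 'C[b]%g :\ 1%g) (Au b).
    rewrite cards1; move=> H.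
    have : #|'C[b]%g :\ 1%g| <= #|S| + 1.
      apply: H => z zA; have := fin b z cb zA; rewrite !inE.
      by case: (_ == e) => ->.
    move: mb; rewrite -/m cardA ltnS => h1 h2.
    rewrite leq_subLR addnC; exact: (leq_trans h1 h2).
move: low; rewrite (Hall e eE) => low.
move: (edge_conn CE) up low => k; clear -m2; lia.
Qed.

End Main.

Theorem mainTheorem7 (gT : finGroupType) :
  min_edge_connected (commuting_edges gT) <-> abelian [set: gT].
Proof.
split; [exact: nonabelian_dir | exact: abelian_dir].
Qed.
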